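(* Let $D$ be a centrally finite division algebra, let $R=D[t_1,\ldots,t_n]$ be the ring of polynomials in $n$ central commuting variables over $D$, let $A$ be a finite subset of $R$, and let $S=D[A]$ be the subring of $R$ generated by $D\cup A$. Then $S$ is centrally finitely generated over $D$.
   Context: All rings are associative with unity. A division algebra is centrally finite if it is finite-dimensional over its center. A ring $S\supseteq D$ is centrally finitely generated over $D$ if $S$ is isomorphic, compatibly with the inclusion of $D$, to a quotient $D[x_1,\ldots,x_m]/I$ of a polynomial ring in central commuting variables by a two-sided ideal $I$ with $D\cap I=\{0\}$; equivalently, $S$ is generated as a ring by $D$ together with finitely many pairwise commuting elements each commuting with every element of $D$. *)

(* Defs.v *)
From HB Require Import structures.
From mathcomp Require Import all_boot all_order all_algebra.
From mathcomp Require Import mpoly.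
Set Implicit Arguments. Unset Strict Implicit. Unset Printing Implicit Defensive.
Import GRing.Theory.
Local Open Scope ring_scope.

(* A division ring: every nonzero element is a unit (nontriviality 1 != 0
   is part of MathComp's ringType). *)
Definition is_division_ring (D : unitRingType) : Prop :=
  forall x : D, x != 0 -> x \is a GRing.unit.

Definition central (D : ringType) (z : D) : Prop := forall x : D, z * x = x * z.

(* Centrally finite: finite-dimensional over its center, i.e. finitely
   generated (equivalently finite-dimensional, the center being a field)
   as a module over the center: there are finitely many elements e_i such
   that every x is a center-linear combination of them. *)
Definition centrally_finite (D : ringType) : Prop :=
  exists e : seq D, forall x : D,
    exists z : seq D, size z = size e /\ (forall c, c \in z -> central c) /\
      x = \sum_(i < size e) z`_i * e`_i.

Definition gen_subring (R : ringType) (X : R -> Prop) : R -> Prop :=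
  fun r => forall P : R -> Prop,
    P 1 -> (forall x y, P x -> P y -> P (x - y)) ->
    (forall x y, P x -> P y -> P (x * y)) ->
    (forall x, X x -> P x) -> P r.

(* S = D[A] inside R = D[t_1..t_n]: the subring generated by the constants
   (the copy of D) together with the finite set A. *)
Definition DA (D : ringType) (n : nat) (A : seq {mpoly D[n]}) : {mpoly D[n]} -> Prop :=
  gen_subring (fun p => (exists c : D, p = c%:MP) \/ p \in A).

(* A subring S of R containing D (the constants) is centrally finitely
   generated over D if S is isomorphic, compatibly with D, to a quotient
   D[x_1..x_m]/I with D \cap I = 0; i.e. there is a ring morphism
   D[x_1..x_m] -> R that is the identity on D and whose image is exactly S
   (its kernel I then meets D trivially). *)
Definition centrally_fin_gen (D : ringType) (n : nat) (S : {mpoly D[n]} -> Prop) : Prop :=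
  exists (m : nat) (f : {rmorphism {mpoly D[m]} -> {mpoly D[n]}}),
    (forall c : D, f c%:MP = c%:MP) /\
    (forall r, S r <-> exists p, f p = r).

(* Main.v *)
Require Import Defs.
From HB Require Import structures.
From mathcomp Require Import all_boot all_order all_algebra.
From mathcomp Require Import mpoly.
From Stdlib Require Import Classical.
Set Implicit Arguments. Unset Strict Implicit. Unset Printing Implicit Defensive.
Import GRing.Theory.
Local Open Scope ring_scope.

Section S.
Variables (D : unitRingType) (n : nat).
Notation R := {mpoly D[n]}.

Lemma mcoeffMC (p : R) c m : (p * c%:MP)@_m = p@_m * c.
Proof.
have E := mpolyE p.
have M := big_morph (mcoeff m) (mcoeffD m) (mcoeff0 _ _).
rewrite [in LHS]E big_distrl /= M.
rewrite [in RHS]E M mulr_suml.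
apply: eq_bigr => k _.
rewrite -scalerAl -commr_mpolyX mul_mpolyC !mcoeffZ mcoeffX.
by rewrite -mulrA commr_nat.
Qed.

Definition cent (c : R) := forall d : D, d%:MP * c = c * d%:MP.

Lemma centR c : cent c -> forall x, GRing.comm x c.
Proof.
move=> cc x; apply/esym; rewrite /GRing.comm (mpolyE x).
apply: commr_sum => k _; rewrite -mul_mpolyC; apply: commrM.
  by rewrite /GRing.comm cc.
exact: commr_mpolyX.
Qed.

Lemma supp_sub (a b : R) : (forall m, a@_m = 0 -> b@_m = 0) ->
  {subset msupp b <= msupp a}.
Proof.
move=> H m; rewrite !mcoeff_msupp => nb; apply/eqP => /H /eqP.
by rewrite (negbTE nb).
Qed.

Lemma size_lt (s1 s2 : seq 'X_{1..n}) x : uniq s1 -> {subset s1 <= s2} ->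
  x \in s2 -> x \notin s1 -> (size s1 < size s2)%N.
Proof.
move=> u sub xs xn.
have := @uniq_leq_size _ (x :: s1) s2; rewrite /= xn u; apply => //.
by move=> y; rewrite inE => /predU1P [->|/sub].
Qed.

Variable hdiv : is_division_ring D.
Variable S : R -> Prop.
Hypothesis hsub : forall x y, S x -> S y -> S (x - y).
Hypothesis hl : forall d x, S x -> S (d%:MP * x).
Hypothesis hr : forall d x, S x -> S (x * d%:MP).

Lemma Qlem k : forall a, S a -> a != 0 -> (size (msupp a) <= k)%N ->
  exists b, [/\ S b, cent b, {subset msupp b <= msupp a} &
     exists2 mu, mu \in msupp a & b@_mu = 1].
Proof.
elim: k => [|k IH] a Sa nz ha.
  by move: ha; rewrite leqn0 size_eq0 msupp_eq0 (negbTE nz).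
case E: (msupp a) => [|mu s].
  by move/eqP: E; rewrite msupp_eq0 (negbTE nz).
have mua : mu \in msupp a by rewrite E mem_head.
rewrite -E.
have ua : a@_mu \is a GRing.unit by apply: hdiv; rewrite -mcoeff_msupp.
set a' := (a@_mu)^-1%:MP * a.
have Sa' : S a' by apply: hl.
have a'mu : a'@_mu = 1 by rewrite mcoeffCM mulVr.
have a'sub : {subset msupp a' <= msupp a}.
  by apply: supp_sub => m0 h; rewrite mcoeffCM h mulr0.
case: (classic (cent a')) => [ca | nca].
  by exists a'; split; [exact: Sa' | exact: ca | exact: a'sub | exists mu].
have [d hd] : exists d : D, d%:MP * a' != a' * d%:MP.
  apply: NNPP => H; apply: nca => d; apply: NNPP => H2; apply: H.
  by exists d; apply/eqP.
set a'' := d%:MP * a' - a' * d%:MP.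
have nz'' : a'' != 0 by rewrite subr_eq0.
have S'' : S a'' by apply: hsub; [apply: hl | apply: hr].
have sub'' : {subset msupp a'' <= msupp a}.
  apply: supp_sub => m0 h.
  have h' : a'@_m0 = 0 by rewrite mcoeffCM h mulr0.
  by rewrite mcoeffB mcoeffCM mcoeffMC h' mulr0 mul0r subrr.
have mu'' : mu \notin msupp a''.
  by rewrite mcoeff_msupp mcoeffB mcoeffCM mcoeffMC a'mu mulr1 mul1r subrr eqxx.
have size'' : (size (msupp a'') <= k)%N.
  by rewrite -ltnS; apply: leq_trans ha; apply: (size_lt (msupp_uniq _) sub'' mua mu'').
have [b [Sb cb sb [mu' h1 h2]]] := IH _ S'' nz'' size''.
exists b; split => //; last by exists mu' => //; apply: sub''.
by move=> x /sb /sub''.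
Qed.

Lemma Plem k : forall a, S a -> (size (msupp a) <= k)%N ->
  exists ps : seq (D * R), (forall q, q \in ps -> S q.2 /\ cent q.2) /\
    a = \sum_(q <- ps) q.1%:MP * q.2.
Proof.
elim: k => [|k IH] a Sa ha.
  exists [::]; split => //; rewrite big_nil; apply/eqP.
  by rewrite -msupp_eq0 -size_eq0 -leqn0.
case: (eqVneq a 0) => [->|nz]; first by exists [::]; rewrite big_nil.
have [b [Sb cb sb [mu mua bmu]]] := Qlem Sa nz (leqnn _).
set a2 := a - (a@_mu)%:MP * b.
have S2 : S a2 by apply: hsub => //; apply: hl.
have sub2 : {subset msupp a2 <= msupp a}.
  apply: supp_sub => m0 h.
  have hb : b@_m0 = 0.
    apply: memN_msupp_eq0; apply/negP => /sb; rewrite mcoeff_msupp h eqxx //.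
  by rewrite mcoeffB mcoeffCM h hb mulr0 subrr.
have mu2 : mu \notin msupp a2.
  by rewrite mcoeff_msupp mcoeffB mcoeffCM bmu mulr1 subrr eqxx.
have size2 : (size (msupp a2) <= k)%N.
  by rewrite -ltnS; apply: leq_trans ha; apply: (size_lt (msupp_uniq _) sub2 mua mu2).
have [ps [Hps Heq]] := IH _ S2 size2.
exists ((a@_mu, b) :: ps); split.
  by move=> q; rewrite inE => /predU1P [-> | /Hps].
by rewrite big_cons /= -Heq /a2 addrC subrK.
Qed.

End S.

Section Morph.
Variables (D : unitRingType) (n m : nat).
Notation R := {mpoly D[n]}.

Record cfam := CFam { cf_h : 'I_m -> R; cf_c : forall i x, GRing.comm x (cf_h i) }.

Definition cmap (F : cfam) (p : {mpoly D[m]}) : R := mmap (@mpolyC n D) (cf_h F) p.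

Lemma cmap_is_additive F : additive (cmap F).
Proof. exact: mmap_is_additive. Qed.

Lemma cmap_is_multiplicative F : multiplicative (cmap F).
Proof.
apply: commr_mmap_is_multiplicative; first exact: cf_c.
move=> p k k'; rewrite /mmap1.
apply: commr_prod => i _; apply: commrX; exact: cf_c.
Qed.

HB.instance Definition _ F := GRing.isAdditive.Build _ _ (cmap F) (cmap_is_additive F).
HB.instance Definition _ F := GRing.isMultiplicative.Build _ _ (cmap F) (cmap_is_multiplicative F).

Definition cmor F : {rmorphism {mpoly D[m]} -> R} := cmap F.
End Morph.

Lemma cmapX D n m (F : cfam D n m) i : cmap F 'X_i = cf_h F i.
Proof. by rewrite /cmap mmapX mmap1U. Qed.

Lemma cmapC D n m (F : cfam D n m) c : cmap F c%:MP = c%:MP.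
Proof. by rewrite /cmap mmapC. Qed.

Section DAcl.
Variables (D : unitRingType) (n : nat) (A : seq {mpoly D[n]}).
Notation R := {mpoly D[n]}.
Lemma DA1 : DA A 1. Proof. by move=> P. Qed.
Lemma DAB x y : DA A x -> DA A y -> DA A (x - y).
Proof. rewrite /DA /gen_subring; move=> hx hy P h1 hB hM hX; apply: (hB); [exact: (hx P h1 hB hM hX) | exact: (hy P h1 hB hM hX)]. Qed.
Lemma DAM x y : DA A x -> DA A y -> DA A (x * y).
Proof. rewrite /DA /gen_subring; move=> hx hy P h1 hB hM hX; apply: (hM); [exact: (hx P h1 hB hM hX) | exact: (hy P h1 hB hM hX)]. Qed.
Lemma DAC c : DA A c%:MP.
Proof. rewrite /DA /gen_subring; move=> P h1 hB hM hX; apply: hX; left; by exists c. Qed.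
Lemma DAA a : a \in A -> DA A a.
Proof. move=> ha P h1 hB hM hX; apply: hX; by right. Qed.
Lemma DA0 : DA A 0. Proof. by rewrite -(subrr 1); apply: DAB; apply: DA1. Qed.
Lemma DAD x y : DA A x -> DA A y -> DA A (x + y).
Proof.
move=> hx hy; rewrite -[y]opprK -[- y]sub0r; apply: DAB => //.
by apply: DAB => //; apply: DA0.
Qed.
Lemma DAsum (I : Type) (r : seq I) (F : I -> R) :
  (forall i, DA A (F i)) -> DA A (\sum_(i <- r) F i).
Proof. move=> H; apply: big_ind; [exact: DA0 | exact: DAD | move=> i _; exact: H]. Qed.
Lemma DAprod (I : Type) (r : seq I) (F : I -> R) :
  (forall i, DA A (F i)) -> DA A (\prod_(i <- r) F i).
Proof. move=> H; apply: big_ind; [exact: DA1 | exact: DAM | move=> i _; exact: H]. Qed.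
Lemma DAX x k : DA A x -> DA A (x ^+ k).
Proof.
move=> hx; elim: k => [|k IH]; first by rewrite expr0; exact: DA1.
by rewrite exprS; apply: DAM.
Qed.
End DAcl.

Unset Implicit Arguments.

Theorem corollary4p5 (D : unitRingType) (hdiv : is_division_ring D)
  (hcf : centrally_finite D) (n : nat) (A : seq {mpoly D[n]}) :
  centrally_fin_gen (DA A).
Proof.
pose S := DA A.
have hsub : forall x y, S x -> S y -> S (x - y) by move=> x y; apply: DAB.
have hl : forall d x, S x -> S (d%:MP * x) by move=> d x hx; apply: DAM => //; apply: DAC.
have hr : forall d x, S x -> S (x * d%:MP) by move=> d x hx; apply: DAM => //; apply: DAC.
have H : forall A' : seq {mpoly D[n]}, {subset A' <= A} -> exists cs : seq {mpoly D[n]},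
   (forall c, c \in cs -> S c /\ cent c) /\
   forall a, a \in A' -> exists ps : seq (D * {mpoly D[n]}),
      (forall q, q \in ps -> q.2 \in cs) /\ a = \sum_(q <- ps) q.1%:MP * q.2.
  elim => [|a0 A' IH] sub.
    by exists [::]; split.
  have [|cs [Hcs Ha]] := IH.
    by move=> x hx; apply: sub; rewrite inE hx orbT.
  have Sa0 : S a0 by apply: DAA; apply: sub; rewrite mem_head.
  have [ps0 [Hps0 E0]] := Plem hdiv hsub hl hr Sa0 (leqnn _).
  exists (map snd ps0 ++ cs); split.
    move=> c; rewrite mem_cat => /orP [/mapP [q qin ->] | /Hcs //].
    exact: Hps0.
  move=> a; rewrite inE => /predU1P [-> | /Ha [ps [Hps E]]].
    exists ps0; split => // q qin; rewrite mem_cat; apply/orP; left.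
    exact: map_f.
  by exists ps; split => // q qin; rewrite mem_cat Hps // orbT.
have [cs [Hcs Ha]] := H A (fun x hx => hx).
pose h := fun i : 'I_(size cs) => cs`_i.
have hc : forall i x, GRing.comm x (h i).
  move=> i x; apply: centR; have := Hcs (h i) (mem_nth 0 (ltn_ord i)).
  by case.
pose F := CFam hc.
exists (size cs), (cmor F); split.
  by move=> c; rewrite /= cmapC.
move=> r; split.
  move=> Sr; apply: (Sr (fun r => exists p, cmor F p = r)).
  - by exists 1; rewrite rmorph1.
  - by move=> x y [p <-] [q <-]; exists (p - q); rewrite rmorphB.
  - by move=> x y [p <-] [q <-]; exists (p * q); rewrite rmorphM.
  move=> x [[c ->] | xA]; first by exists c%:MP; rewrite /= cmapC.
  have [ps [Hps ->]] := Ha x xA.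
  elim: ps Hps => [|q ps IHps] Hps; first by exists 0; rewrite big_nil rmorph0.
  have [|p Ep] := IHps.
    by move=> q' q'in; apply: Hps; rewrite inE q'in orbT.
  have qin : q.2 \in cs by apply: Hps; rewrite mem_head.
  exists (q.1%:MP * 'X_(Ordinal (etrans (index_mem q.2 cs) qin)) + p).
  rewrite big_cons rmorphD rmorphM /= cmapC cmapX Ep /=.
  by rewrite /h nth_index.
move=> [p <-]; rewrite /= /cmap /mmap.
apply: DAsum => k; apply: DAM; first exact: DAC.
rewrite /mmap1; apply: DAprod => i; apply: DAX.
by have [] := Hcs (h i) (mem_nth 0 (ltn_ord i)).
Qed.
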